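(* Let $X:I\times J\to\mathbb{R}^4$ be a pencil surface $X(s,t)=\gamma(s)+A(t)V_2(s)+B(t)V_4(s)$ (notation and standing assumptions as in the context). Then the Gaussian curvature of $X$ at $(s,t)$ is $$K=\frac{(a^2+b^2)\,\bigl(A'B''-B'A''\bigr)\,\bigl\{A'\,b\,\kappa_3-B'(\kappa_1 a-\kappa_2 b)\bigr\}-\bigl((A')^2+(B')^2\bigr)\bigl(a\,b_t-b\,a_t\bigr)^2}{E^2G^2},$$ where $E=a^2+b^2$, $G=(A')^2+(B')^2$, and all functions are evaluated at $s$, $t$ or $(s,t)$ as appropriate.
   Context: Let $I,J\subset\mathbb{R}$ be open intervals and $\gamma:I\to\mathbb{R}^4$ a smooth unit-speed curve equipped with a smooth orthonormal frame $(V_1,V_2,V_3,V_4)$ along $\gamma$ and smooth functions $\kappa_1,\kappa_2,\kappa_3:I\to\mathbb{R}$ satisfying the Frenet equations $\gamma'=V_1$, $V_1'=\kappa_1V_2$, $V_2'=-\kappa_1V_1+\kappa_2V_3$, $V_3'=-\kappa_2V_2+\kappa_3V_4$, $V_4'=-\kappa_3V_3$. Let $A,B:J\to\mathbb{R}$ be smooth (''marching-scale functions'') and define the pencil surface $X(s,t)=\gamma(s)+A(t)V_2(s)+B(t)V_4(s)$. Put $a(s,t)=1-\kappa_1(s)A(t)$ and $b(s,t)=\kappa_2(s)A(t)-\kappa_3(s)B(t)$, and assume $a^2+b^2>0$ on $I\times J$ and $A'(t)^2+B'(t)^2>0$ on $J$ (so $X$ is an immersion). Primes on $A,B$ denote $d/dt$;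 subscripts $s,t$ denote partial derivatives. $K$ is the Gaussian curvature of the induced metric. *)

(* Defs.v *)
From Stdlib Require Import Reals Lra ClassicalEpsilon.
Open Scope R_scope.

(* The derivative of f at x: the unique l with derivable_pt_lim f x l when
   f is differentiable at x (junk value otherwise). *)
Definition Deriv (f : R -> R) (x : R) : R :=
  epsilon (inhabits 0) (fun l => derivable_pt_lim f x l).

Definition Ds (f : R -> R -> R) (s t : R) : R := Deriv (fun u => f u t) s.
Definition Dt (f : R -> R -> R) (s t : R) : R := Deriv (fun v => f s v) t.

Definition is_open_interval (I : R -> Prop) : Prop :=
  (exists x, I x) /\
  (forall x y z, I x -> I z -> x <= y <= z -> I y) /\
  (forall x, I x -> exists e, 0 < e /\ forall y, Rabs (y - x) < e -> I y).

Definition smooth_on (I : R -> Prop) (f : R -> R) : Prop :=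
  forall (n : nat) (x : R), I x ->
    exists l, derivable_pt_lim (Nat.iter n Deriv f) x l.

Record V4 : Type := mkV4 { c1 : R; c2 : R; c3 : R; c4 : R }.

Definition vadd (u v : V4) : V4 :=
  mkV4 (c1 u + c1 v) (c2 u + c2 v) (c3 u + c3 v) (c4 u + c4 v).
Definition vscale (r : R) (v : V4) : V4 :=
  mkV4 (r * c1 v) (r * c2 v) (r * c3 v) (r * c4 v).
Definition vdot (u v : V4) : R :=
  c1 u * c1 v + c2 u * c2 v + c3 u * c3 v + c4 u * c4 v.

Definition vderiv_lim (c : R -> V4) (x : R) (v : V4) : Prop :=
  derivable_pt_lim (fun u => c1 (c u)) x (c1 v) /\
  derivable_pt_lim (fun u => c2 (c u)) x (c2 v) /\
  derivable_pt_lim (fun u => c3 (c u)) x (c3 v) /\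
  derivable_pt_lim (fun u => c4 (c u)) x (c4 v).

Definition vsmooth_on (I : R -> Prop) (c : R -> V4) : Prop :=
  smooth_on I (fun u => c1 (c u)) /\ smooth_on I (fun u => c2 (c u)) /\
  smooth_on I (fun u => c3 (c u)) /\ smooth_on I (fun u => c4 (c u)).

Definition Xs (X : R -> R -> V4) (s t : R) : V4 :=
  mkV4 (Ds (fun u v => c1 (X u v)) s t) (Ds (fun u v => c2 (X u v)) s t)
       (Ds (fun u v => c3 (X u v)) s t) (Ds (fun u v => c4 (X u v)) s t).
Definition Xt (X : R -> R -> V4) (s t : R) : V4 :=
  mkV4 (Dt (fun u v => c1 (X u v)) s t) (Dt (fun u v => c2 (X u v)) s t)
       (Dt (fun u v => c3 (X u v)) s t) (Dt (fun u v => c4 (X u v)) s t).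

Definition metricE (X : R -> R -> V4) (s t : R) : R := vdot (Xs X s t) (Xs X s t).
Definition metricF (X : R -> R -> V4) (s t : R) : R := vdot (Xs X s t) (Xt X s t).
Definition metricG (X : R -> R -> V4) (s t : R) : R := vdot (Xt X s t) (Xt X s t).

Definition det3 (a11 a12 a13 a21 a22 a23 a31 a32 a33 : R) : R :=
  a11 * (a22 * a33 - a23 * a32)
  - a12 * (a21 * a33 - a23 * a31)
  + a13 * (a21 * a32 - a22 * a31).

(* Gaussian curvature of the metric E ds^2 + 2F ds dt + G dt^2 at (s,t),
   given by the Brioschi formula (it depends only on E, F, G). *)
Definition gauss_curv_metric (E F G : R -> R -> R) (s t : R) : R :=
  let e := E s t in let f := F s t in let g := G s t in
  let Es := Ds E s t in let Et := Dt E s t in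
  let Fs := Ds F s t in let Ft := Dt F s t in
  let Gs := Ds G s t in let Gt := Dt G s t in
  let Ett := Dt (Dt E) s t in let Fst := Dt (Ds F) s t in
  let Gss := Ds (Ds G) s t in
  (det3 (- Ett / 2 + Fst - Gss / 2) (Es / 2) (Fs - Et / 2)
        (Ft - Gs / 2) e f
        (Gt / 2) f g
   - det3 0 (Et / 2) (Gs / 2)
          (Et / 2) e f
          (Gs / 2) f g)
  / (e * g - f ^ 2) ^ 2.

Definition gauss_curv (X : R -> R -> V4) (s t : R) : R :=
  gauss_curv_metric (metricE X) (metricF X) (metricG X) s t.

Definition pencil (gamma V2 V4' : R -> V4) (A B : R -> R) (s t : R) : V4 :=
  vadd (gamma s) (vadd (vscale (A t) (V2 s)) (vscale (B t) (V4' s))).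

(* Main.v *)
Require Import Defs.
From Stdlib Require Import Reals Lra ClassicalEpsilon.
Open Scope R_scope.

Lemma Deriv_eq f x l : derivable_pt_lim f x l -> Deriv f x = l.
Proof.
  intro H. unfold Deriv.
  apply (uniqueness_limite f x); [|exact H].
  apply (epsilon_spec (inhabits 0) (fun l => derivable_pt_lim f x l)). exists l; exact H.
Qed.

Lemma dpl_loc f g x l e : 0 < e -> (forall y, Rabs (y - x) < e -> f y = g y) ->
  derivable_pt_lim g x l -> derivable_pt_lim f x l.
Proof.
  intros He Hfg Hg eps Heps. destruct (Hg eps Heps) as [d Hd].
  assert (Hm : 0 < Rmin d e) by (apply Rmin_pos; [apply cond_pos | exact He]).
  exists (mkposreal _ Hm). intros h Hh0 Hh. simpl in Hh.
  rewrite (Hfg (x + h)), (Hfg x).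
  - apply Hd; auto. apply Rlt_le_trans with (1 := Hh), Rmin_l.
  - replace (x - x) with 0 by ring. rewrite Rabs_R0; exact He.
  - replace (x + h - x) with h by ring. apply Rlt_le_trans with (1 := Hh), Rmin_r.
Qed.

Lemma D_eq f x l1 l2 : derivable_pt_lim f x l1 -> l1 = l2 -> derivable_pt_lim f x l2.
Proof. intros H ->; exact H. Qed.
Lemma D_const c x : derivable_pt_lim (fun _ => c) x 0.
Proof. apply derivable_pt_lim_const. Qed.
Lemma D_add f g x lf lg : derivable_pt_lim f x lf -> derivable_pt_lim g x lg ->
  derivable_pt_lim (fun y => f y + g y) x (lf + lg).
Proof. apply derivable_pt_lim_plus. Qed.
Lemma D_sub f g x lf lg : derivable_pt_lim f x lf -> derivable_pt_lim g x lg ->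
  derivable_pt_lim (fun y => f y - g y) x (lf - lg).
Proof. apply derivable_pt_lim_minus. Qed.
Lemma D_mul f g x lf lg : derivable_pt_lim f x lf -> derivable_pt_lim g x lg ->
  derivable_pt_lim (fun y => f y * g y) x (lf * g x + f x * lg).
Proof. apply derivable_pt_lim_mult. Qed.
Lemma D_opp f x lf : derivable_pt_lim f x lf -> derivable_pt_lim (fun y => - f y) x (- lf).
Proof. apply derivable_pt_lim_opp. Qed.
Lemma D_sq f x lf : derivable_pt_lim f x lf ->
  derivable_pt_lim (fun y => f y ^ 2) x (2 * f x * lf).
Proof.
  intro H. eapply D_eq. apply (dpl_loc _ (fun y => f y * f y) x _ 1). lra.
  intros; ring. apply D_mul; eassumption. ring.
Qed.

Ltac dtac := first [ apply D_const | apply D_add | apply D_sub | apply D_sq | apply D_mul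
  | apply D_sq | apply D_opp | eassumption ].

Lemma vdot_comb a b x y c d z w :
  vdot (vadd (vscale a x) (vscale b y)) (vadd (vscale c z) (vscale d w)) =
  a * c * vdot x z + a * d * vdot x w + b * c * vdot y z + b * d * vdot y w.
Proof. destruct x, y, z, w; unfold vdot, vadd, vscale; simpl; ring. Qed.

Lemma vdot_sym x y : vdot x y = vdot y x.
Proof. destruct x, y; unfold vdot; simpl; ring. Qed.
Theorem proposition1
  (I J : R -> Prop) (gamma V1 V2 V3 V4' : R -> V4)
  (k1 k2 k3 A B : R -> R)
  (HI : is_open_interval I) (HJ : is_open_interval J)
  (Hsg : vsmooth_on I gamma)
  (Hs1 : vsmooth_on I V1) (Hs2 : vsmooth_on I V2)
  (Hs3 : vsmooth_on I V3) (Hs4 : vsmooth_on I V4')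
  (Hk1 : smooth_on I k1) (Hk2 : smooth_on I k2) (Hk3 : smooth_on I k3)
  (HA : smooth_on J A) (HB : smooth_on J B)
  (Horth : forall s, I s ->
     vdot (V1 s) (V1 s) = 1 /\ vdot (V2 s) (V2 s) = 1 /\
     vdot (V3 s) (V3 s) = 1 /\ vdot (V4' s) (V4' s) = 1 /\
     vdot (V1 s) (V2 s) = 0 /\ vdot (V1 s) (V3 s) = 0 /\
     vdot (V1 s) (V4' s) = 0 /\ vdot (V2 s) (V3 s) = 0 /\
     vdot (V2 s) (V4' s) = 0 /\ vdot (V3 s) (V4' s) = 0)
  (Hfrenet : forall s, I s ->
     vderiv_lim gamma s (V1 s) /\
     vderiv_lim V1 s (vscale (k1 s) (V2 s)) /\
     vderiv_lim V2 s (vadd (vscale (- k1 s) (V1 s)) (vscale (k2 s) (V3 s))) /\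
     vderiv_lim V3 s (vadd (vscale (- k2 s) (V2 s)) (vscale (k3 s) (V4' s))) /\
     vderiv_lim V4' s (vscale (- k3 s) (V3 s)))
  (Hab : forall s t, I s -> J t ->
     (1 - k1 s * A t) ^ 2 + (k2 s * A t - k3 s * B t) ^ 2 > 0)
  (HAB : forall t, J t -> Deriv A t ^ 2 + Deriv B t ^ 2 > 0) :
  let a := fun s t => 1 - k1 s * A t in
  let b := fun s t => k2 s * A t - k3 s * B t in
  forall s t, I s -> J t ->
    let A1 := Deriv A t in let A2 := Deriv (Deriv A) t in
    let B1 := Deriv B t in let B2 := Deriv (Deriv B) t in
    let E := a s t ^ 2 + b s t ^ 2 in
    let G := A1 ^ 2 + B1 ^ 2 in
    gauss_curv (pencil gamma V2 V4' A B) s t =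
      (E * (A1 * B2 - B1 * A2)
         * (A1 * b s t * k3 s - B1 * (k1 s * a s t - k2 s * b s t))
       - G * (a s t * Dt b s t - b s t * Dt a s t) ^ 2)
      / (E ^ 2 * G ^ 2).
Proof.
  intros a b s t Hs Ht A1 A2 B1 B2 E G.
  set (X := pencil gamma V2 V4' A B).
  destruct HI as [_ [_ HIo]]. destruct HJ as [_ [_ HJo]].
  assert (dA : forall v, J v -> derivable_pt_lim A v (Deriv A v)).
  { intros v Hv. destruct (HA 0%nat v Hv) as [l Hl]. simpl in Hl.
    rewrite (Deriv_eq _ _ _ Hl). exact Hl. }
  assert (dB : forall v, J v -> derivable_pt_lim B v (Deriv B v)).
  { intros v Hv. destruct (HB 0%nat v Hv) as [l Hl]. simpl in Hl.
    rewrite (Deriv_eq _ _ _ Hl). exact Hl. }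
  assert (dA2 : forall v, J v -> derivable_pt_lim (Deriv A) v (Deriv (Deriv A) v)).
  { intros v Hv. destruct (HA 1%nat v Hv) as [l Hl]. simpl in Hl.
    rewrite (Deriv_eq _ _ _ Hl). exact Hl. }
  assert (dB2 : forall v, J v -> derivable_pt_lim (Deriv B) v (Deriv (Deriv B) v)).
  { intros v Hv. destruct (HB 1%nat v Hv) as [l Hl]. simpl in Hl.
    rewrite (Deriv_eq _ _ _ Hl). exact Hl. }
  assert (HXs : forall u v, I u -> Xs X u v =
     vadd (vscale (1 - k1 u * A v) (V1 u)) (vscale (k2 u * A v - k3 u * B v) (V3 u))).
  { intros u v Hu. destruct (Hfrenet u Hu) as [Hg [_ [H2 [_ H4]]]].
    destruct Hg as [g1 [g2 [g3 g4]]]. destruct H2 as [p1 [p2 [p3 p4]]].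
    destruct H4 as [q1 [q2 [q3 q4]]]. simpl in g1, g2, g3, g4, p1, p2, p3, p4, q1, q2, q3, q4.
    unfold Xs, Ds, X, pencil, vadd, vscale; simpl.
    f_equal; apply Deriv_eq; eapply D_eq; (try (repeat dtac)); cbv beta; ring. }
  assert (HXt : forall u v, J v -> Xt X u v =
     vadd (vscale (Deriv A v) (V2 u)) (vscale (Deriv B v) (V4' u))).
  { intros u v Hv. pose proof (dA v Hv). pose proof (dB v Hv).
    unfold Xt, Dt, X, pencil, vadd, vscale; simpl.
    f_equal; apply Deriv_eq; eapply D_eq; (try (repeat dtac)); cbv beta; ring. }
  assert (HE : forall u v, I u -> J v -> metricE X u v =
     (1 - k1 u * A v) ^ 2 + (k2 u * A v - k3 u * B v) ^ 2).
  { intros u v Hu Hv. unfold metricE. rewrite HXs, vdot_comb by exact Hu.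
    destruct (Horth u Hu) as (o1 & o2 & o3 & o4 & o12 & o13 & o14 & o23 & o24 & o34).
    rewrite o1, o3, o13, (vdot_sym (V3 u)), o13. ring. }
  assert (HF : forall u v, I u -> J v -> metricF X u v = 0).
  { intros u v Hu Hv. unfold metricF. rewrite HXs, HXt, vdot_comb by assumption.
    destruct (Horth u Hu) as (o1 & o2 & o3 & o4 & o12 & o13 & o14 & o23 & o24 & o34).
    rewrite o12, o14, (vdot_sym (V3 u)), o23, o34. ring. }
  assert (HG : forall u v, I u -> J v -> metricG X u v = Deriv A v ^ 2 + Deriv B v ^ 2).
  { intros u v Hu Hv. unfold metricG. rewrite HXt, vdot_comb by assumption.
    destruct (Horth u Hu) as (o1 & o2 & o3 & o4 & o12 & o13 & o14 & o23 & o24 & o34).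
    rewrite o2, o4, o24, (vdot_sym (V4' u)), o24. ring. }
  assert (dEt : forall v, J v -> Dt (metricE X) s v =
     2 * ((1 - k1 s * A v) * (- k1 s * Deriv A v) +
          (k2 s * A v - k3 s * B v) * (k2 s * Deriv A v - k3 s * Deriv B v))).
  { intros v Hv. destruct (HJo v Hv) as [e [He Hn]]. unfold Dt. apply Deriv_eq.
    apply (dpl_loc _ (fun y => (1 - k1 s * A y) ^ 2 + (k2 s * A y - k3 s * B y) ^ 2) _ _ e He).
    { intros y Hy. apply HE; auto. }
    pose proof (dA v Hv); pose proof (dB v Hv).
    eapply D_eq; [repeat dtac | cbv beta; ring]. }
  assert (Ett : Dt (Dt (metricE X)) s t =
     2 * ((- k1 s * Deriv A t) ^ 2 + (1 - k1 s * A t) * (- k1 s * Deriv (Deriv A) t)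
          + (k2 s * Deriv A t - k3 s * Deriv B t) ^ 2
          + (k2 s * A t - k3 s * B t) * (k2 s * Deriv (Deriv A) t - k3 s * Deriv (Deriv B) t))).
  { destruct (HJo t Ht) as [e [He Hn]]. unfold Dt at 1. apply Deriv_eq.
    apply (dpl_loc _ (fun v => 2 * ((1 - k1 s * A v) * (- k1 s * Deriv A v) +
          (k2 s * A v - k3 s * B v) * (k2 s * Deriv A v - k3 s * Deriv B v))) _ _ e He).
    { intros y Hy. apply dEt; auto. }
    pose proof (dA t Ht); pose proof (dB t Ht); pose proof (dA2 t Ht); pose proof (dB2 t Ht).
    eapply D_eq; [repeat dtac | cbv beta; ring]. }
  assert (Gt : Dt (metricG X) s t =
     2 * Deriv A t * Deriv (Deriv A) t + 2 * Deriv B t * Deriv (Deriv B) t).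
  { destruct (HJo t Ht) as [e [He Hn]]. unfold Dt. apply Deriv_eq.
    apply (dpl_loc _ (fun v => Deriv A v ^ 2 + Deriv B v ^ 2) _ _ e He).
    { intros y Hy. apply HG; auto. }
    pose proof (dA2 t Ht); pose proof (dB2 t Ht).
    eapply D_eq; [repeat dtac | cbv beta; ring]. }
  assert (dGs : forall u, I u -> Ds (metricG X) u t = 0).
  { intros u Hu. destruct (HIo u Hu) as [e [He Hn]]. unfold Ds. apply Deriv_eq.
    apply (dpl_loc _ (fun _ => Deriv A t ^ 2 + Deriv B t ^ 2) _ _ e He).
    { intros y Hy. apply HG; auto. }
    apply D_const. }
  assert (Gss : Ds (Ds (metricG X)) s t = 0).
  { destruct (HIo s Hs) as [e [He Hn]]. unfold Ds at 1. apply Deriv_eq.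
    apply (dpl_loc _ (fun _ => 0) _ _ e He).
    { intros y Hy. apply dGs; auto. }
    apply D_const. }
  assert (dFs : forall v, J v -> Ds (metricF X) s v = 0).
  { intros v Hv. destruct (HIo s Hs) as [e [He Hn]]. unfold Ds. apply Deriv_eq.
    apply (dpl_loc _ (fun _ => 0) _ _ e He).
    { intros y Hy. apply HF; auto. }
    apply D_const. }
  assert (Ft : Dt (metricF X) s t = 0).
  { destruct (HJo t Ht) as [e [He Hn]]. unfold Dt. apply Deriv_eq.
    apply (dpl_loc _ (fun _ => 0) _ _ e He).
    { intros y Hy. apply HF; auto. }
    apply D_const. }
  assert (Fst : Dt (Ds (metricF X)) s t = 0).
  { destruct (HJo t Ht) as [e [He Hn]]. unfold Dt. apply Deriv_eq.
    apply (dpl_loc _ (fun _ => 0) _ _ e He).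
    { intros y Hy. apply dFs; auto. }
    apply D_const. }
  assert (Da : Dt a s t = - k1 s * Deriv A t).
  { unfold Dt, a. apply Deriv_eq. pose proof (dA t Ht).
    eapply D_eq; [repeat dtac | cbv beta; ring]. }
  assert (Db : Dt b s t = k2 s * Deriv A t - k3 s * Deriv B t).
  { unfold Dt, b. apply Deriv_eq. pose proof (dA t Ht); pose proof (dB t Ht).
    eapply D_eq; [repeat dtac | cbv beta; ring]. }
  pose proof (Hab s t Hs Ht) as Hne1. pose proof (HAB t Ht) as Hne2.
  unfold gauss_curv, gauss_curv_metric. cbv zeta.
  rewrite Ett, (dEt t Ht), Gt, (dGs s Hs), Gss, (dFs t Ht), Ft, Fst, Da, Db.
  rewrite HE, HF, HG by assumption.
  unfold E, G, A1, A2, B1, B2, a, b, det3.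
  field. split; lra.
Qed.
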